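(* Assume $f$ has a unique global maximizer $g$ and the problem contains no weak epistasis. For every $S\subseteq V$ and every assignment $R$ with $\mathcal C(R)=V\setminus\big(S\cup\mathcal{IN}(S)\cup\mathcal{IN}^2(S)\big)$, we have $g[s]\in\Psi_{\{(\mathcal{IN}(S)\setminus S,\,g)\}\cup R}[s]$ for all $s\in S$.
   Context: Fix $\ell\ge1$, loci $V=\{0,\dots,\ell-1\}$, chromosomes $\vec y\in\{0,1\}^V$, fitness $f:\{0,1\}^V\to\mathbb R$ (maximized) with unique global maximizer $g$. An assignment $A$ is a set of pairs $(v,a)$ ($v\in V$, $a\in\{0,1\}$) with at most one pair per locus; $A[v]=a$ if $(v,a)\in A$, else $A[v]=*$; coverage $\mathcal C(A)=\{v:A[v]\ne*\}$; for $T\subseteq V$, $\{(T,g)\}=\{(t,g[t]):t\in T\}$. $\Psi_A$ (constrained optima) is the set of chromosomes agreeing with $A$ on $\mathcal C(A)$ with maximum fitness among such chromosomes; $\Psi_A[v]=\{\psi_v:\psi\in\Psi_A\}$. Epistasis: for $v\in V$ and nonempty $S\subseteq V\setminus\{v\}$, $S\Rightarrow v$ iff for every $s\in S$ there exists an assignment $A$ with $\mathcal C(A)=S$ and $\Psi_A[v]\neq\Psi_{A\setminus\{(s,A[s])\}}[v]$; the empty set is never epistatic. An epistasis $S\Rightarrow v$ with $|S|\ge2$ is weak if no nonempty proper subset $T\subsetneq S$ has $T\Rightarrow v$; ''no weak epistasis'' means no epistasis is weak. $\mathcal{IN}(v)=\{u:\{u\}\Rightarrow v\}$, $\mathcal{IN}^2(v)=\{u:\exists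 w\in\mathcal{IN}(v),\ \{u\}\Rightarrow w\}$, and for $S\subseteq V$, $\mathcal{IN}(S)=\bigcup_{v\in S}\mathcal{IN}(v)$, $\mathcal{IN}^2(S)=\bigcup_{v\in S}\mathcal{IN}^2(v)$. *)

(* Defs.v *)
From mathcomp Require Import all_boot all_order all_algebra.
From mathcomp Require Import boolp.
Set Implicit Arguments. Unset Strict Implicit. Unset Printing Implicit Defensive.
Import Order.TTheory GRing.Theory Num.Theory.
Local Open Scope ring_scope.

Section Epistasis.
Variable l : nat.
(* loci V = 'I_l ; chromosomes are functions V -> {0,1} (bool) *)
Definition chrom := {ffun 'I_l -> bool}.
(* assignment: at most one value per locus; None = '*' *)
Definition assignment := {ffun 'I_l -> option bool}.

Definition coverage (A : assignment) : {set 'I_l} := [set v | A v != None].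

Definition agrees (A : assignment) (y : chrom) : bool :=
  [forall v, if A v is Some a then y v == a else true].

Variable R : realDomainType.
Variable f : chrom -> R.

Definition Psi (A : assignment) : {set chrom} :=
  [set y | agrees A y && [forall z, agrees A z ==> (f z <= f y)]].

Definition Psi_at (A : assignment) (v : 'I_l) : {set bool} :=
  [set (y : chrom) v | y in Psi A].

Definition remove_locus (A : assignment) (s : 'I_l) : assignment :=
  [ffun v => if v == s then None else A v].

Definition epistatic (S : {set 'I_l}) (v : 'I_l) : Prop :=
  S != set0 /\ v \notin S /\
  forall s, s \in S -> exists A : assignment,
     coverage A = S /\ Psi_at A v != Psi_at (remove_locus A s) v.

Definition weak_epistasis (S : {set 'I_l}) (v : 'I_l) : Prop :=
  epistatic S v /\ (2 <= #|S|)%N /\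
  forall T : {set 'I_l}, T \proper S -> T != set0 -> ~ epistatic T v.

Definition no_weak_epistasis : Prop :=
  forall S v, ~ weak_epistasis S v.

Definition IN (v : 'I_l) : {set 'I_l} :=
  [set u | `[< epistatic [set u] v >]].

Definition IN2 (v : 'I_l) : {set 'I_l} :=
  [set u | [exists w, (w \in IN v) && `[< epistatic [set u] w >]]].

Definition IN_set (S : {set 'I_l}) : {set 'I_l} := \bigcup_(v in S) IN v.
Definition IN2_set (S : {set 'I_l}) : {set 'I_l} := \bigcup_(v in S) IN2 v.

Definition assign_of (T : {set 'I_l}) (g : chrom) : assignment :=
  [ffun t => if t \in T then Some (g t) else None].

(* union of two assignments (used only for assignments with disjoint coverage) *)
Definition assign_union (A B : assignment) : assignment :=
  [ffun v => if A v is Some a then Some a else B v].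

Definition unique_global_max (g : chrom) : Prop :=
  forall y : chrom, y != g -> f y < f g.

End Epistasis.

(* Main.v *)
Require Import Defs.
From mathcomp Require Import all_boot all_order all_algebra.
From mathcomp Require Import boolp.
From Stdlib Require Classical_Prop.
Import Order.TTheory GRing.Theory Num.Theory.
Local Open Scope ring_scope.

Section Helpers.
Variables (l : nat) (R : realDomainType) (f : chrom l -> R).

Lemma descent (nw : no_weak_epistasis f) :
  forall n (C : {set 'I_l}) v, (#|C| <= n)%N -> epistatic f C v ->
  exists u, u \in C /\ epistatic f [set u] v.
Proof.
elim=> [|n IH] C v hC hE.
  case: hE => hne _; exfalso; move: hC; rewrite leqn0 cards_eq0 => /eqP hc.
  by move: hne; rewrite hc eqxx.
have [h1|h1] := boolP (#|C| == 1%N).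
  have [u hu] := cards1P h1; exists u; split; first by rewrite hu set11.
  by rewrite -hu.
have h2 : (2 <= #|C|)%N.
  case: hE => hne _; move: hne; rewrite -card_gt0 => hp.
  by move: h1 hp; case: #|C| => [|[|k]].
apply: Classical_Prop.NNPP => hno; apply: (nw C v); split; first by [].
split; first by [].
move=> T hT hT0 hTE.
have hTc : (#|T| <= n)%N.
  by have h := proper_card hT; rewrite -ltnS; apply: leq_trans h hC.
have [u [huT huE]] := IH T v hTc hTE.
apply: hno; exists u; split=> //.
by move/proper_sub: hT => /subsetP; apply.
Qed.

Definition emptyA : assignment l := [ffun => None].

Lemma coverage_remove (B : assignment l) s :
  coverage (remove_locus B s) = coverage B :\ s.
Proof.
apply/setP=> u; rewrite !inE ffunE.
by case: (u == s).
Qed.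

Lemma lemP (nw : no_weak_epistasis f) :
  forall n (B : assignment l) v, (#|coverage B| <= n)%N ->
  v \notin coverage B -> (forall u, u \in coverage B -> u \notin IN f v) ->
  Psi_at f B v = Psi_at f emptyA v.
Proof.
elim=> [|n IH] B v hC hv hIN.
  have -> : B = emptyA; last by [].
  apply/ffunP=> u; rewrite ffunE.
  move: hC; rewrite leqn0 cards_eq0 => /eqP /setP /(_ u).
  by rewrite !inE; case: (B u).
have [/eqP h0|hne] := boolP (coverage B == set0).
  have -> : B = emptyA; last by [].
  apply/ffunP=> u; rewrite ffunE.
  move: h0 => /setP /(_ u).
  by rewrite !inE; case: (B u).
have hnE : ~ epistatic f (coverage B) v.
  move=> hE.
  have [u [hu huE]] := descent nw _ _ _ (leqnn _) hE.
  by move: (hIN u hu); rewrite inE; move/negP; apply; apply/asboolP.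
have [s [hs hsP]] : exists s, s \in coverage B /\
   forall A : assignment l, coverage A = coverage B ->
     Psi_at f A v = Psi_at f (remove_locus A s) v.
  apply: Classical_Prop.NNPP => hno; apply: hnE; split=> //; split=> //.
  move=> s hs; apply: Classical_Prop.NNPP => hnA; apply: hno.
  exists s; split=> // A hA; apply/eqP; apply: Classical_Prop.NNPP => hneq.
  by apply: hnA; exists A; split=> //; apply/negP.
rewrite (hsP B erefl); apply: IH.
- rewrite coverage_remove.
  have := cardsD1 s (coverage B); rewrite hs add1n => hc.
  by move: hC; rewrite hc ltnS.
- by rewrite coverage_remove inE negb_and hv orbT.
- by move=> u; rewrite coverage_remove inE => /andP [_ ]; apply: hIN.
Qed.

Lemma psi_empty (g : chrom l) : unique_global_max f g ->
  forall v b, b \in Psi_at f emptyA v -> b = g v.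
Proof.
move=> hg v b /imsetP [z hz ->].
have [/eqP -> //|hzg] := boolP (z == g).
move: hz; rewrite inE => /andP [_ /forallP /(_ g)].
have -> : agrees emptyA g by apply/forallP=> u; rewrite ffunE.
move=> /= hle; have := hg z hzg.
by rewrite ltNge hle.
Qed.

End Helpers.

Theorem theorem4 (l : nat) (R : realDomainType) (f : chrom l -> R) (g : chrom l) :
  (1 <= l)%N ->
  unique_global_max f g ->
  no_weak_epistasis f ->
  forall (S : {set 'I_l}) (Rs : assignment l),
    coverage Rs = ~: (S :|: IN_set f S :|: IN2_set f S) ->
    forall s, s \in S ->
      g s \in Psi_at f (assign_union (assign_of (IN_set f S :\: S) g) Rs) s.
Proof.
move=> _ hg nw S Rs hcov s hs.
have [y hy] : exists y, y \in Psi f Rs.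
  pose P := [pred z : chrom l | agrees Rs z].
  have [z0 hz0] : exists z, agrees Rs z.
    exists [ffun u => if Rs u is Some a then a else false].
    by apply/forallP=> u; rewrite ffunE; case: (Rs u).
  have [y' hy'] : exists y', P y' && [forall z, P z ==> (f z <= f y')].
    pose m := [arg max_(i > z0 | P i) f i]%O.
    exists m; rewrite /m; case: arg_maxP => //= i Pi hi.
    by rewrite Pi /=; apply/forallP=> z; apply/implyP => Pz; apply: hi.
  by exists y'; rewrite inE.
have yval : forall v, v \notin coverage Rs ->
    (forall u, u \in coverage Rs -> u \notin IN f v) -> y v = g v.
  move=> v hv hIN.
  apply: (@psi_empty _ _ f g hg v (y v)).
  rewrite -(@lemP _ _ f nw _ _ _ (leqnn _) hv hIN).
  by apply/imsetP; exists y.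
have yS : forall v, v \in S :|: IN_set f S -> y v = g v.
  move=> v hvS; apply: yval.
    by rewrite hcov !inE negbK; move: hvS; rewrite !inE => /orP [->|->] //; rewrite orbT.
  move=> u; rewrite hcov !inE => /norP [/norP [_ hu1] hu2]; apply/negP => huv.
  move: hvS; rewrite inE => /orP [hvS|hvI].
    by move/negP: hu1; apply; apply/bigcupP; exists v => //; rewrite inE.
  move: hvI => /bigcupP [w hw hvw].
  move/negP: hu2; apply; apply/bigcupP; exists w => //.
  rewrite inE; apply/existsP; exists v; rewrite hvw /=.
  by [].
apply/imsetP; exists y; last by rewrite yS // inE hs.
move: hy; rewrite !inE => /andP [hyA hymax].
have RsT : forall v, v \in IN_set f S :\: S -> Rs v = None.
  move=> v hv; apply/eqP; apply: contraT => hn.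
  have : v \in coverage Rs by rewrite inE.
  rewrite hcov !inE; move: hv; rewrite inE => /andP [_ ->].
  by rewrite orbT.
apply/andP; split.
  apply/forallP=> v; rewrite !ffunE.
  case: ifP => hvT /=.
    by rewrite yS //; move: hvT; rewrite !inE => /andP [_ ->]; rewrite orbT.
  by move/forallP: hyA => /(_ v).
apply/forallP=> z; apply/implyP=> hzA.
move/forallP: hymax => /(_ z) /implyP; apply.
apply/forallP=> v; move/forallP: hzA => /(_ v); rewrite !ffunE.
case: ifP => hvT; last by [].
by rewrite RsT.
Qed.
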